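(* Let $\Omega\subset\mathbb{R}^2$ be a smooth bounded domain, let $(u_p)_{p>1}$ be a family of sign-changing solutions of $-\Delta u=|u|^{p-1}u$ in $\Omega$, $u=0$ on $\partial\Omega$, with $p\int_\Omega|\nabla u_p|^2dx\to\beta\in\mathbb{R}$, and let $k\in\mathbb{N}\setminus\{0\}$ and families $(x_{i,p})$, $i=1,\dots,k$, be such that (along a sequence $p\to+\infty$) $p|u_p(x_{i,p})|^{p-1}\to+\infty$ and $(\mathcal P_1^k)$, $(\mathcal P_2^k)$, $(\mathcal P_3^k)$ hold, with no family $(x_{k+1,p})$ extending them as described below. Then $$\frac{\operatorname{dist}(x_{i,p},NL_p)}{\mu_{i,p}}\to+\infty\quad\text{as }p\to+\infty,\ \text{for all }i\in\{1,\dots,k\}.$$ As a consequence, for each $i$, letting $\mathcal N_{i,p}\subset\Omega$ be the nodal domain of $u_p$ containing $x_{i,p}$, $u_p^i:=u_p\chi_{\mathcal N_{i,p}}$, and $$z_{i,p}(x):=\frac{p}{u_p(x_{i,p})}\left(u_p^i(x_{i,p}+\mu_{i,p}x)-u_p(x_{i,p})\right),\quad x\in\widetilde{\mathcal N}_{i,p}:=\frac{\mathcal N_{i,p}-x_{i,p}}{\mu_{i,p}},$$ one has $z_{i,p}\to U$ in $C^1_{loc}(\mathbb{R}^2)$.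
   Context: $NL_p:=\{x\in\Omega:u_p(x)=0\}$ is the nodal line; $\chi_A$ is the characteristic function of $A$. $\mu_{i,p}:=(p|u_p(x_{i,p})|^{p-1})^{-1/2}$, $R_{n,p}(x):=\min_{i\le n}|x-x_{i,p}|$, $U(x)=\log\left(\frac{1}{1+\frac18|x|^2}\right)^2$. $(\mathcal P_1^n)$: $|x_{i,p}-x_{j,p}|/\mu_{i,p}\to+\infty$ for $i\ne j$. $(\mathcal P_2^n)$: $v_{i,p}(x):=\frac{p}{u_p(x_{i,p})}(u_p(x_{i,p}+\mu_{i,p}x)-u_p(x_{i,p}))\to U$ in $C^1_{loc}(\mathbb{R}^2)$ for each $i$. $(\mathcal P_3^n)$: $\exists C>0$ with $pR_{n,p}(x)^2|u_p(x)|^{p-1}\le C$ for $p$ large, all $x\in\Omega$. Maximality: for no family $(x_{k+1,p})$ can one extract a further sequence along which $(\mathcal P_1^{k+1}),(\mathcal P_2^{k+1}),(\mathcal P_3^{k+1})$ hold for $(x_{i,p})_{i=1,\dots,k+1}$ (such $k$ and families exist by the preceding proposition of the paper). *)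

(* Defs.v *)
From HB Require Import structures.
From mathcomp Require Import all_boot all_order all_algebra.
From mathcomp Require Import all_classical all_reals all_analysis.
Set Implicit Arguments. Unset Strict Implicit. Unset Printing Implicit Defensive.
Import Order.TTheory GRing.Theory Num.Theory.
Import numFieldNormedType.Exports.
Local Open Scope classical_set_scope.
Local Open Scope ring_scope.

Section Defs.
Variable R : realType.
Notation P2 := (R * R)%type.

Definition enorm (y : P2) : R := Num.sqrt (y.1 ^+ 2 + y.2 ^+ 2).
Definition dif (a b : P2) : P2 := (a.1 - b.1, a.2 - b.2).
Definition shift (a : P2) (m : R) (y : P2) : P2 := (a.1 + m * y.1, a.2 + m * y.2).

Definition pd1 (f : P2 -> R) (x : P2) : R := derive1 (fun t => f (t, x.2)) x.1.
Definition pd2 (f : P2 -> R) (x : P2) : R := derive1 (fun t => f (x.1, t)) x.2.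

Fixpoint Ck (n : nat) (A : set P2) (f : P2 -> R) : Prop :=
  match n with
  | O => forall x, A x -> {for x, continuous f}
  | S m => (forall x, A x -> {for x, continuous f}) /\
           (forall x, A x -> derivable (fun t => f (t, x.2)) x.1 1 /\
                             derivable (fun t => f (x.1, t)) x.2 1) /\
           Ck m A (pd1 f) /\ Ck m A (pd2 f)
  end.

Definition smooth (f : P2 -> R) : Prop := forall n, Ck n setT f.

Definition smooth_bounded_domain (O : set P2) : Prop :=
  open O /\ connected O /\ O !=set0 /\
  (exists M : R, forall x, O x -> enorm x <= M) /\
  exists phi : P2 -> R, smooth phi /\
    (forall x, O x <-> phi x < 0) /\
    (forall x, phi x = 0 -> (pd1 phi x, pd2 phi x) != (0, 0)).

Definition laplacian (f : P2 -> R) (x : P2) : R := pd1 (pd1 f) x + pd2 (pd2 f) x.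
Definition grad2 (f : P2 -> R) (x : P2) : R := pd1 f x ^+ 2 + pd2 f x ^+ 2.

Definition solution (O : set P2) (p : R) (u : P2 -> R) : Prop :=
  Ck 2 O u /\ {within closure O, continuous u} /\
  (forall x, closure O x -> ~ O x -> u x = 0) /\
  (forall x, O x -> - laplacian u x = `|u x| `^ (p - 1) * u x).

Definition sign_changing (O : set P2) (u : P2 -> R) : Prop :=
  exists a b, O a /\ O b /\ 0 < u a /\ u b < 0.

Definition dirichlet_energy (O : set P2) (u : P2 -> R) : \bar R :=
  (\int[(@lebesgue_measure R \x @lebesgue_measure R)%E]_(x in O) (grad2 u x)%:E)%E.

Definition eventually (P : nat -> Prop) : Prop := exists N, forall n, (N <= n)%N -> P n.
Definition divergesy (a : nat -> R) : Prop := forall M : R, eventually (fun n => M < a n).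

Definition mu (p : R) (u : P2 -> R) (a : P2) : R := (p * `|u a| `^ (p - 1)) `^ (- (1 / 2)).

Definition Ububble (y : P2) : R := ln ((1 / (1 + enorm y ^+ 2 / 8)) ^+ 2).

Definition C1loc (f : nat -> P2 -> R) (D : nat -> set P2) (g : P2 -> R) : Prop :=
  forall r : R, 0 < r ->
    eventually (fun n => forall y, enorm y <= r -> D n y) /\
    forall eps : R, 0 < eps -> eventually (fun n => forall y, enorm y <= r ->
       `|f n y - g y| < eps /\ `|pd1 (f n) y - pd1 g y| < eps /\
       `|pd2 (f n) y - pd2 g y| < eps).

Definition Rmin (k : nat) (xs : nat -> P2) (y : P2) : R :=
  inf [set d | exists2 i, (i < k)%N & d = enorm (dif y (xs i))].

Definition Prop1 (k : nat) (u : R -> P2 -> R) (p : nat -> R) (x : nat -> nat -> P2) :=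
  forall i j, (i < k)%N -> (j < k)%N -> i <> j ->
    divergesy (fun n => enorm (dif (x i n) (x j n)) / mu (p n) (u (p n)) (x i n)).

Definition blowup (u : R -> P2 -> R) (p : nat -> R) (a : nat -> P2) (n : nat) (y : P2) : R :=
  p n / u (p n) (a n) * (u (p n) (shift (a n) (mu (p n) (u (p n)) (a n)) y) - u (p n) (a n)).

Definition Prop2 (O : set P2) (k : nat) (u : R -> P2 -> R) (p : nat -> R) (x : nat -> nat -> P2) :=
  forall i, (i < k)%N ->
    C1loc (blowup u p (x i))
          (fun n => [set y | O (shift (x i n) (mu (p n) (u (p n)) (x i n)) y)])
          Ububble.

Definition Prop3 (O : set P2) (k : nat) (u : R -> P2 -> R) (p : nat -> R) (x : nat -> nat -> P2) :=
  exists C : R, 0 < C /\ eventually (fun n => forall y, O y ->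
    p n * Rmin k (x ^~ n) y ^+ 2 * `|u (p n) y| `^ (p n - 1) <= C).

Definition Props (O : set P2) (k : nat) (u : R -> P2 -> R) (p : nat -> R) (x : nat -> nat -> P2) :=
  Prop1 k u p x /\ Prop2 O k u p x /\ Prop3 O k u p x.

Definition nodal_line (O : set P2) (f : P2 -> R) : set P2 := [set z | O z /\ f z = 0].
Definition dist_to (a : P2) (S : set P2) : R := inf [set d | exists2 z, S z & d = enorm (dif a z)].

Definition nodal_domain (O : set P2) (f : P2 -> R) (a : P2) : set P2 :=
  connected_component [set z | O z /\ f z != 0] a.

Definition zresc (O : set P2) (u : R -> P2 -> R) (p : nat -> R) (a : nat -> P2) (n : nat) (y : P2) : R :=
  let N := nodal_domain O (u (p n)) (a n) in
  let w := shift (a n) (mu (p n) (u (p n)) (a n)) y in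
  p n / u (p n) (a n) * ((if w \in N then u (p n) w else 0) - u (p n) (a n)).

Definition zdom (O : set P2) (u : R -> P2 -> R) (p : nat -> R) (a : nat -> P2) (n : nat) : set P2 :=
  [set y | nodal_domain O (u (p n)) (a n) (shift (a n) (mu (p n) (u (p n)) (a n)) y)].

End Defs.

(* Main.v *)
Require Import Defs.
From HB Require Import structures.
From mathcomp Require Import all_boot all_order all_algebra.
From mathcomp Require Import all_classical all_reals all_analysis.
From mathcomp Require Import lra ring.
Import Order.TTheory GRing.Theory Num.Theory.
Import numFieldNormedType.Exports.
Local Open Scope classical_set_scope.
Local Open Scope ring_scope.

Section H.
Context {R : realType}.
Notation P2 := (R * R)%type.
Local Notation eventually := Defs.eventually.

Lemma ev_and (P Q : nat -> Prop) : eventually P -> eventually Q ->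
  eventually (fun n => P n /\ Q n).
Proof.
move=> [N1 H1] [N2 H2]; exists (maxn N1 N2) => n hn; split.
  by apply: H1; apply: leq_trans hn; exact: leq_maxl.
by apply: H2; apply: leq_trans hn; exact: leq_maxr.
Qed.

Lemma ev_imp (P Q : nat -> Prop) : (forall n, P n -> Q n) -> eventually P -> eventually Q.
Proof. by move=> h [N H]; exists N => n /H /h. Qed.

Arguments ev_and {P Q}.
Arguments ev_imp {P Q}.

Lemma enormZ (c : R) (v : P2) : enorm (c * v.1, c * v.2) = `|c| * enorm v.
Proof.
rewrite /enorm /= !exprMn -mulrDr sqrtrM ?sqr_ge0 //.
by rewrite sqrtr_sqr.
Qed.

Lemma enorm_ge1 (v : P2) : `|v.1| <= enorm v.
Proof.
rewrite /enorm -sqrtr_sqr ler_sqrt ?addr_ge0 ?sqr_ge0 //.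
by rewrite lerDl sqr_ge0.
Qed.

Lemma enorm_ge2 (v : P2) : `|v.2| <= enorm v.
Proof.
rewrite /enorm -sqrtr_sqr ler_sqrt ?addr_ge0 ?sqr_ge0 //.
by rewrite lerDr sqr_ge0.
Qed.

Lemma enorm_le (v : P2) : enorm v <= `|v.1| + `|v.2|.
Proof.
rewrite /enorm -(@ger0_norm _ (`|v.1| + `|v.2|)) ?addr_ge0 //.
rewrite -sqrtr_sqr ler_sqrt ?sqr_ge0 //.
rewrite -(real_normK (num_real v.1)) -(real_normK (num_real v.2)).
have h1 := normr_ge0 v.1; have h2 := normr_ge0 v.2.
rewrite sqrrD; nra.
Qed.

Lemma enorm_ge0 (v : P2) : 0 <= enorm v.
Proof. exact: sqrtr_ge0. Qed.

Lemma enorm_difC (a b : P2) : enorm (dif a b) = enorm (dif b a).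
Proof. by rewrite /enorm /dif /= -(sqrrN (a.1 - b.1)) -(sqrrN (a.2 - b.2)) !opprB. Qed.

Lemma Ububble_lb (M : R) (y : P2) : enorm y <= M ->
  ln ((1 / (1 + M ^+ 2 / 8)) ^+ 2) <= Ububble y.
Proof.
move=> hy; have e0 := enorm_ge0 y.
have hM : enorm y ^+ 2 <= M ^+ 2 by nra.
rewrite /Ububble ler_ln ?posrE; last 2 first.
- by apply: exprn_gt0; rewrite div1r invr_gt0; nra.
- by apply: exprn_gt0; rewrite div1r invr_gt0; nra.
have h1 : 0 < 1 + enorm y ^+ 2 / 8 by nra.
have h2 : 1 + enorm y ^+ 2 / 8 <= 1 + M ^+ 2 / 8 by lra.
have h3 : 1 / (1 + M ^+ 2 / 8) <= 1 / (1 + enorm y ^+ 2 / 8).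
  by rewrite !div1r lef_pV2 ?posrE //; lra.
have h4 : 0 < 1 / (1 + M ^+ 2 / 8) by rewrite div1r invr_gt0; nra.
nra.
Qed.


Lemma open_pos (O : set P2) (f : P2 -> R) : open O ->
  (forall x, O x -> {for x, continuous f}) -> open [set z | O z /\ 0 < f z].
Proof.
move=> oO hc; rewrite openE => z [Oz fz]; rewrite /interior.
near=> w; split; near: w; first by apply: open_nbhs_nbhs; split.
exact: (cvgr_gt (f z) (hc z Oz) 0 fz).
Unshelve. all: by end_near. Qed.

Lemma open_neg (O : set P2) (f : P2 -> R) : open O ->
  (forall x, O x -> {for x, continuous f}) -> open [set z | O z /\ f z < 0].
Proof.
move=> oO hc; rewrite openE => z [Oz fz]; rewrite /interior.
near=> w; split; near: w; first by apply: open_nbhs_nbhs; split.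
exact: (cvgr_lt (f z) (hc z Oz) 0 fz).
Unshelve. all: by end_near. Qed.

Lemma NL_nonempty (O : set P2) (f : P2 -> R) : open O -> connected O ->
  (forall x, O x -> {for x, continuous f}) ->
  (exists a b, O a /\ O b /\ 0 < f a /\ f b < 0) -> exists z, O z /\ f z = 0.
Proof.
move=> oO cO hc [a [b [Oa [Ob [fa fb]]]]].
case: (pselect (exists z, O z /\ f z = 0)) => // hno; exfalso.
have BO : [set z | O z /\ 0 < f z] = O.
  apply: cO.
  - by exists a.
  - exists [set z | O z /\ 0 < f z]; first exact: open_pos.
    by apply/seteqP; split => z /= [] //; move=> ? []. 
  - exists (~` [set z | O z /\ f z < 0]); first by apply: open_closedC; exact: open_neg.
    apply/seteqP; split => z /=.
      by move=> [Oz fz]; split => // -[_]; lra.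
    move=> [Oz hz]; split => //.
    have : f z != 0 by apply/eqP => h; apply: hno; exists z.
    case: (ltgtP (f z) 0) => // h _; exfalso; exact: hz.
have : [set z | O z /\ 0 < f z] b by rewrite BO.
by move=> [_]; lra.
Qed.


Lemma square_in_component (O : set P2) (f : P2 -> R) (a : P2) (m c : R) :
  (forall y : P2, `|y.1| < c -> `|y.2| < c -> O (Defs.shift a m y) /\ f (Defs.shift a m y) != 0) ->
  forall y : P2, `|y.1| < c -> `|y.2| < c -> nodal_domain O f a (Defs.shift a m y).
Proof.
move=> hS y hy1 hy2.
pose A := fun w : P2 => (fun l : R => Defs.shift a m (l * w.1, l * w.2)) @` `[0, 1].
pose Q := fun w : P2 => `|w.1| < c /\ `|w.2| < c.
have sub : \bigcup_(w in Q) A w `<=` [set z | O z /\ f z != 0].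
  move=> z [w [hw1 hw2] [l]]; rewrite /= in_itv /= => /andP[l0 l1] <-.
  apply: hS => /=; rewrite normrM ger0_norm //.
    by apply: le_lt_trans hw1; rewrite ler_piMl.
  by apply: le_lt_trans hw2; rewrite ler_piMl.
have a0 : forall w, Defs.shift a m (0 * w.1, 0 * w.2) = a.
  by move=> w; rewrite /Defs.shift /= !mul0r !mulr0 !addr0 -surjective_pairing.
have cA : connected (\bigcup_(w in Q) A w).
  apply: bigcup_connected.
    exists a => w _; exists 0; first by rewrite /= in_itv /= lexx ler01.
    exact: a0.
  move=> w _; apply: connected_continuous_connected; first exact: segment_connected.
  apply: continuous_subspaceT => l.
  rewrite /Defs.shift /=.
  have h1 : (fun l0 : R => a.1 + m * (l0 * w.1)) @ l --> a.1 + m * (l * w.1).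
    apply: cvgD; first exact: cvg_cst; apply: cvgM; first exact: cvg_cst.
    by apply: cvgM; [exact: cvg_id|exact: cvg_cst].
  have h2 : (fun l0 : R => a.2 + m * (l0 * w.2)) @ l --> a.2 + m * (l * w.2).
    apply: cvgD; first exact: cvg_cst; apply: cvgM; first exact: cvg_cst.
    by apply: cvgM; [exact: cvg_id|exact: cvg_cst].
  exact: (cvg_pair h1 h2).
have hya : A y (Defs.shift a m y).
  exists 1; first by rewrite /= in_itv /= lexx ler01.
  by rewrite /Defs.shift !mul1r -!surjective_pairing.
apply: (connected_component_max _ sub cA).
- by exists y => //; exists 0; [rewrite /= in_itv /= lexx ler01 | exact: a0].
- by exists y.
Qed.


Lemma L1 (u : R -> P2 -> R) (p : nat -> R) (a : nat -> P2) (D : nat -> set P2) :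
  (forall n, 1 < p n) -> divergesy p ->
  divergesy (fun n => p n * `|u (p n) (a n)| `^ (p n - 1)) ->
  C1loc (blowup u p a) D (@Ububble R) ->
  forall M, 0 < M -> eventually (fun n => 0 < mu (p n) (u (p n)) (a n) /\
    u (p n) (a n) != 0 /\
    forall z, u (p n) z = 0 -> M * mu (p n) (u (p n)) (a n) <= enorm (dif (a n) z)).
Proof.
move=> p1 hp hd hC M M0.
have [_ hE] := hC M M0.
have ev1 := hE 1 ltr01.
have ev2 := hp (1 - ln ((1 / (1 + M ^+ 2 / 8)) ^+ 2)).
have ev3 := hd 0.
apply: (ev_imp _ (ev_and ev1 (ev_and ev2 ev3))) => n [h1 [h2 h3]].
have ua : u (p n) (a n) != 0.
  apply/eqP => h; move: h3; rewrite h normr0 powR0 ?mulr0 ?ltxx //.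
  by rewrite subr_eq0 gt_eqF.
have m0 : 0 < mu (p n) (u (p n)) (a n).
  by rewrite /mu powR_gt0 // mulr_gt0 ?(lt_trans ltr01) // powR_gt0 // normr_gt0.
split; [|split] => // z uz.
rewrite leNgt; apply/negP => hlt.
pose m := mu (p n) (u (p n)) (a n).
pose y : P2 := (m^-1 * (dif z (a n)).1, m^-1 * (dif z (a n)).2).
have ey : enorm y <= M.
  rewrite /y enormZ gtr0_norm ?invr_gt0 // -enorm_difC mulrC ler_pdivrMr //.
  exact: ltW.
have e1 : (a n).1 + m * (m^-1 * (z.1 - (a n).1)) = z.1.
  by rewrite mulrA mulfV ?gt_eqF // mul1r addrC subrK.
have e2 : (a n).2 + m * (m^-1 * (z.2 - (a n).2)) = z.2.
  by rewrite mulrA mulfV ?gt_eqF // mul1r addrC subrK.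
have sy : Defs.shift (a n) m y = z.
  by rewrite /Defs.shift /y /= e1 e2 -surjective_pairing.
have [hb _] := h1 y ey.
move: hb; rewrite /blowup -/m sy uz sub0r mulrN -mulrA mulVf // mulr1.
have lb := @Ububble_lb M y ey.
rewrite ltr_norml => /andP[h _]; lra.
Qed.

Lemma enorm_dif_shift (a : P2) (m : R) (y : P2) :
  enorm (dif a (Defs.shift a m y)) = `|m| * enorm y.
Proof.
have -> : dif a (Defs.shift a m y) = ((- m) * y.1, (- m) * y.2).
  by rewrite /dif /Defs.shift /=; congr pair; ring.
by rewrite enormZ normrN.
Qed.

End H.
Arguments L1 {R u p a D}.
Arguments ev_and {P Q}.
Arguments ev_imp {P Q}.
Arguments NL_nonempty {R O f}.

Theorem corollary2p4 (R : realType) (O : set (R * R)) (u : R -> R * R -> R)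
  (beta : R) (k : nat) (p : nat -> R) (x : nat -> nat -> R * R) :
  smooth_bounded_domain O ->
  (forall q : R, 1 < q -> solution O q (u q) /\ sign_changing O (u q)) ->
  (forall eps : R, 0 < eps -> exists q0 : R, forall q : R, q0 < q ->
     (`| (q%:E * dirichlet_energy O (u q)) - beta%:E | < eps%:E)%E) ->
  (0 < k)%N ->
  (forall n, 1 < p n) -> divergesy p ->
  (forall i n, (i < k)%N -> O (x i n)) ->
  (forall i, (i < k)%N -> divergesy (fun n => p n * `|u (p n) (x i n)| `^ (p n - 1))) ->
  Props O k u p x ->
  ~ (exists (y : nat -> R * R) (phi : nat -> nat),
        (forall n, O (y n)) /\ {homo phi : m n / (m < n)%N} /\
        Props O k.+1 u (p \o phi)
          (fun i n => if i == k then y (phi n) else x i (phi n))) ->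
  (forall i, (i < k)%N ->
     divergesy (fun n => dist_to (x i n) (nodal_line O (u (p n)))
                         / mu (p n) (u (p n)) (x i n))) /\
  (forall i, (i < k)%N ->
     C1loc (zresc O u p (x i)) (zdom O u p (x i)) (@Ububble R)).
Proof.
move=> hO hsol _ _ p1 hp _ hdiv [_ [P2 _]] _.
have [oO [cO _]] := hO.
have NLn : forall n, exists z, O z /\ u (p n) z = 0.
  move=> n; have [[[hc _] _] hsc] := hsol _ (p1 n).
  exact: NL_nonempty oO cO hc hsc.
split.
- move=> i ik M.
  have hC := P2 i ik.
  have hM0 : 0 < `|M| + 1 by have := normr_ge0 M; lra.
  have := L1 p1 hp (hdiv i ik) hC _ hM0.
  apply: ev_imp => n [m0 [ua hz]].
  have [z0 [Oz0 uz0]] := NLn n.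
  have hd : (`|M| + 1) * mu (p n) (u (p n)) (x i n) <=
            dist_to (x i n) (nodal_line O (u (p n))).
    apply: lb_le_inf; first by exists (enorm (dif (x i n) z0)); exists z0.
    by move=> d [z [Oz uz] ->]; exact: hz.
  rewrite ltr_pdivlMr //; apply: lt_le_trans hd; rewrite ltr_pM2r //.
  have := ler_norm M; lra.
- move=> i ik r r0.
  have hC := P2 i ik.
  pose c := r + 1.
  have c0 : 0 < c by rewrite /c; lra.
  have hM0 : 0 < 2 * c + 1 by lra.
  have L := L1 p1 hp (hdiv i ik) hC _ hM0.
  have [hD _] := hC (2 * c) (ltac:(lra)).
  have key : Defs.eventually (fun n => forall y : R * R, `|y.1| < c -> `|y.2| < c ->
      nodal_domain O (u (p n)) (x i n) (Defs.shift (x i n) (mu (p n) (u (p n)) (x i n)) y)).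
    apply: (ev_imp _ (ev_and L hD)) => n [[m0 [ua hz]] hd].
    apply: square_in_component => y h1 h2.
    have ey : enorm y < 2 * c by have := enorm_le y; lra.
    have Ow := hd y (ltW ey).
    split => //; apply/eqP => hw.
    have := hz _ hw; rewrite enorm_dif_shift gtr0_norm // => h.
    have : mu (p n) (u (p n)) (x i n) * enorm y < mu (p n) (u (p n)) (x i n) * (2 * c).
      by rewrite ltr_pM2l.
    nra.
  split.
  + apply: (ev_imp _ key) => n hk y hy; rewrite /zdom /=; apply: hk.
      by have := enorm_ge1 y; rewrite /c; lra.
    by have := enorm_ge2 y; rewrite /c; lra.
  + move=> eps e0; have [_ hE] := hC r r0.
    apply: (ev_imp _ (ev_and key (hE eps e0))) => n [hk hb] y hy.
    have eq0 : forall w : R * R, `|w.1| < c -> `|w.2| < c ->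
        zresc O u p (x i) n w = blowup u p (x i) n w.
      by move=> w h1 h2; rewrite /zresc /blowup /= (mem_set (hk w h1 h2)).
    have y1 : `|y.1| <= r by have := enorm_ge1 y; lra.
    have y2 : `|y.2| <= r by have := enorm_ge2 y; lra.
    have e1 : zresc O u p (x i) n y = blowup u p (x i) n y.
      by apply: eq0; rewrite /c; lra.
    have d1 : pd1 (zresc O u p (x i) n) y = pd1 (blowup u p (x i) n) y.
      rewrite /pd1 !derive1E; apply: near_eq_derive.
      apply/nbhs_ballP; exists 1 => //= t; rewrite /ball /= => ht.
      apply: eq0 => /=; last by rewrite /c; lra.
      have := ler_normB y.1 (y.1 - t); rewrite subKr /c; lra.
    have d2 : pd2 (zresc O u p (x i) n) y = pd2 (blowup u p (x i) n) y.
      rewrite /pd2 !derive1E; apply: near_eq_derive.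
      apply/nbhs_ballP; exists 1 => //= t; rewrite /ball /= => ht.
      apply: eq0 => /=; first by rewrite /c; lra.
      have := ler_normB y.2 (y.2 - t); rewrite subKr /c; lra.
    by rewrite e1 d1 d2; exact: hb.
Qed.
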